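(* Let $\Phi$ be a second-order constraint problem and $J$ an interpretation of the index symbols. (1) Soundness: if $J\models\mathrm{sk}(\Phi)$, then $(J,\xi_{sk})$ is a model of $\Phi$. (2) Completeness: if $(J,\xi)$ is a model of $\Phi$ for some second-order substitution $\xi$, then $J'\models\mathrm{sk}(\Phi)$ for some interpretation $J'$ extending $J$ to the skolem functions $f_\alpha$.
   Context: Index terms over index variables $i$ and index symbols $g$ (including $0,\mathsf s,+$); an interpretation $J$ maps each $k$-ary $g$ to a total weakly monotone function $\mathbb N^k\to\mathbb N$ ($0,\mathsf s,+$ standard); $a\le_J b$ iff $[a]^\beta_J\le[b]^\beta_J$ for every assignment $\beta$. Second-order index terms: $a::=i\mid\alpha\mid g(a_1,\dots,a_{\mathrm{ar}(g)})$ with $\alpha$ second-order index variables; $\mathrm{Var}(a)$ and $\mathrm{SOVar}(a)$ are the sets of first- and second-order variables of $a$. An SOCP $\Phi$ is a set of inequalities $a\le b$ and occurrence constraints $i\notin\alpha$. A second-order substitution $\xi$ maps second-order variables to index terms without second-order variables. $(J,\xi)$ is a model of $\Phi$ if $a\xi\le_J b\xi$ for all inequalities and $i\notin\mathrm{Var}(\xi(\alpha))$ for all occurrence constraints in $\Phi$. A first-order constraint problem (FOCP) is a set of inequalities without second-order variables; $J\models\Psi$ means $a\le_J b$ for all $(a\le b)\in\Psi$. Skolemisation: let $V(\beta)$ (for second-order variables $\beta$ of $\Phi$) be the least sets with, for every $(a\le b)\in\Phi$ such that $\beta\in\mathrm{SOVar}(b)$, $\mathrm{Var}(a)\subseteq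 V(\beta)$ and $V(\alpha)\subseteq V(\beta)$ for each $\alpha\in\mathrm{SOVar}(a)$; set $\mathrm{SV}(\beta)=V(\beta)\setminus\{i\mid(i\notin\beta)\in\Phi\}$. For each second-order variable $\alpha$ of $\Phi$ let $f_\alpha$ be a fresh index symbol of arity $|\mathrm{SV}(\alpha)|$; the skolem substitution is $\xi_{sk}(\alpha)=f_\alpha(i_1,\dots,i_k)$ where $\mathrm{SV}(\alpha)=\{i_1,\dots,i_k\}$ (in a fixed order). The skolemisation of $\Phi$ is the FOCP $\mathrm{sk}(\Phi)=\{a\xi_{sk}\le b\xi_{sk}\mid(a\le b)\in\Phi\}$. *)

(* Defs.v *)
From Stdlib Require Import List Arith.
Import ListNotations.
Set Implicit Arguments.

Inductive term (S : Type) : Type :=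
| TVar : nat -> term S
| TSO : nat -> term S
| TZero : term S
| TSucc : term S -> term S
| TPlus : term S -> term S -> term S
| TFun : S -> list (term S) -> term S.

Arguments TVar {S} _.
Arguments TSO {S} _.
Arguments TZero {S}.
Arguments TSucc {S} _.
Arguments TPlus {S} _ _.
Arguments TFun {S} _ _.

Fixpoint wf {S} (ar : S -> nat) (t : term S) : Prop :=
  match t with
  | TVar _ | TSO _ | TZero => True
  | TSucc a => wf ar a
  | TPlus a b => wf ar a /\ wf ar b
  | TFun g args =>
      length args = ar g /\
      (fix wfl (l : list (term S)) : Prop :=
         match l with nil => True | u :: l' => wf ar u /\ wfl l' end) args
  end.

Fixpoint vars {S} (t : term S) : list nat :=
  match t with
  | TVar i => [i]
  | TSO _ | TZero => []
  | TSucc a => vars a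
  | TPlus a b => vars a ++ vars b
  | TFun _ args =>
      (fix vl (l : list (term S)) : list nat :=
         match l with nil => [] | u :: l' => vars u ++ vl l' end) args
  end.

Fixpoint sovars {S} (t : term S) : list nat :=
  match t with
  | TSO a => [a]
  | TVar _ | TZero => []
  | TSucc a => sovars a
  | TPlus a b => sovars a ++ sovars b
  | TFun _ args =>
      (fix vl (l : list (term S)) : list nat :=
         match l with nil => [] | u :: l' => sovars u ++ vl l' end) args
  end.

(* Renaming of index symbols (used to view a term over S as a term over the
   extended signature S + skolem symbols). *)
Fixpoint rename {S T} (f : S -> T) (t : term S) : term T :=
  match t with
  | TVar i => TVar i
  | TSO a => TSO a
  | TZero => TZero
  | TSucc a => TSucc (rename f a)
  | TPlus a b => TPlus (rename f a) (rename f b)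
  | TFun g args => TFun (f g) (map (rename f) args)
  end.

Fixpoint subst {S} (xi : nat -> term S) (t : term S) : term S :=
  match t with
  | TVar i => TVar i
  | TSO a => xi a
  | TZero => TZero
  | TSucc a => TSucc (subst xi a)
  | TPlus a b => TPlus (subst xi a) (subst xi b)
  | TFun g args => TFun g (map (subst xi) args)
  end.

(* Value [a]^beta_J ; 0, s, + are interpreted in the standard way.
   (Second-order variables get value 0; evaluation is only used on terms
   without second-order variables.) *)
Fixpoint eval {S} (J : S -> list nat -> nat) (beta : nat -> nat) (t : term S)
  : nat :=
  match t with
  | TVar i => beta i
  | TSO _ => 0
  | TZero => 0
  | TSucc a => Datatypes.S (eval J beta a)
  | TPlus a b => eval J beta a + eval J beta b
  | TFun g args => J g (map (eval J beta) args)
  end.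

(* J is an interpretation: each k-ary symbol g denotes a (total) weakly
   monotone function N^k -> N (represented on lists of length k). *)
Definition interpretation {S} (ar : S -> nat) (J : S -> list nat -> nat) : Prop :=
  forall g (l1 l2 : list nat),
    length l1 = ar g -> Forall2 le l1 l2 -> J g l1 <= J g l2.

Definition leJ {S} (J : S -> list nat -> nat) (a b : term S) : Prop :=
  forall beta : nat -> nat, eval J beta a <= eval J beta b.

(* Constraints of an SOCP: inequalities a <= b and occurrence constraints
   i \notin alpha. *)
Inductive constr (S : Type) : Type :=
| Le : term S -> term S -> constr S
| NotIn : nat -> nat -> constr S.

Arguments Le {S} _ _.
Arguments NotIn {S} _ _.

Definition socp (S : Type) := list (constr S).

Definition wf_socp {S} (ar : S -> nat) (Phi : socp S) : Prop :=
  forall a b, In (Le a b) Phi -> wf ar a /\ wf ar b.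

Definition so_subst {S} (ar : S -> nat) (xi : nat -> term S) : Prop :=
  forall alpha, wf ar (xi alpha) /\ sovars (xi alpha) = [].

Definition is_model {S} (J : S -> list nat -> nat) (xi : nat -> term S)
  (Phi : socp S) : Prop :=
  (forall a b, In (Le a b) Phi -> leJ J (subst xi a) (subst xi b)) /\
  (forall i alpha, In (NotIn i alpha) Phi -> ~ In i (vars (xi alpha))).

Definition focp (S : Type) := list (term S * term S).

Definition satisfies {S} (J : S -> list nat -> nat) (Psi : focp S) : Prop :=
  forall a b, In (a, b) Psi -> leJ J a b.

(* V(beta): least family of sets with the two closure conditions.
   [inV Phi beta i] means i \in V(beta). *)
Inductive inV {S} (Phi : socp S) : nat -> nat -> Prop :=
| inV_var : forall a b beta i,
    In (Le a b) Phi -> In beta (sovars b) -> In i (vars a) -> inV Phi beta i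
| inV_so : forall a b beta alpha i,
    In (Le a b) Phi -> In beta (sovars b) -> In alpha (sovars a) ->
    inV Phi alpha i -> inV Phi beta i.

Definition inSV {S} (Phi : socp S) (beta i : nat) : Prop :=
  inV Phi beta i /\ ~ In (NotIn i beta) Phi.

Definition enumerates_SV {S} (Phi : socp S) (sv : nat -> list nat) : Prop :=
  forall alpha, NoDup (sv alpha) /\ (forall i, In i (sv alpha) <-> inSV Phi alpha i).

(* Extended signature: original symbols (inl g) and skolem symbols
   f_alpha = inr alpha, of arity |SV(alpha)|. *)
Definition ar_sk {S} (ar : S -> nat) (sv : nat -> list nat) (g : S + nat) : nat :=
  match g with inl g' => ar g' | inr alpha => length (sv alpha) end.

Definition xi_sk {S} (sv : nat -> list nat) (alpha : nat) : term (S + nat) :=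
  TFun (inr alpha) (map TVar (sv alpha)).

Definition lift_socp {S} (Phi : socp S) : socp (S + nat) :=
  map (fun c => match c with
                | Le a b => Le (rename inl a) (rename inl b)
                | NotIn i alpha => NotIn i alpha
                end) Phi.

Fixpoint sk {S} (sv : nat -> list nat) (Phi : socp S) : focp (S + nat) :=
  match Phi with
  | nil => nil
  | Le a b :: Phi' =>
      (subst (xi_sk sv) (rename inl a), subst (xi_sk sv) (rename inl b))
        :: sk sv Phi'
  | NotIn _ _ :: Phi' => sk sv Phi'
  end.

(* Main.v *)
Require Import Defs.
From Stdlib Require Import List Arith Lia ClassicalEpsilon.
Import ListNotations.
From Stdlib Require Import FunctionalExtensionality.

Section Aux.
Variable S : Type.

Section Ind.
Variable P : term S -> Prop.
Hypothesis HV : forall i, P (TVar i).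
Hypothesis HSO : forall a, P (TSO a).
Hypothesis HZ : P TZero.
Hypothesis HS : forall a, P a -> P (TSucc a).
Hypothesis HP : forall a b, P a -> P b -> P (TPlus a b).
Hypothesis HF : forall g l, Forall P l -> P (TFun g l).
Fixpoint tind (t : term S) : P t :=
  match t with
  | TVar i => HV i | TSO a => HSO a | TZero => HZ
  | TSucc a => HS a (tind a) | TPlus a b => HP a b (tind a) (tind b)
  | TFun g l => HF g l ((fix go (l : list (term S)) : Forall P l :=
       match l with nil => Forall_nil _ | u :: l' => @Forall_cons _ P u l' (tind u) (go l') end) l)
  end.
End Ind.

Lemma vars_fun g l : vars (TFun g l) = flat_map (@vars S) l.
Proof. induction l; simpl in *; try rewrite IHl; auto. Qed.
Lemma sovars_fun g l : sovars (TFun g l) = flat_map (@sovars S) l.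
Proof. induction l; simpl in *; try rewrite IHl; auto. Qed.
Lemma wf_fun (ar : S -> nat) g l : wf ar (TFun g l) <-> length l = ar g /\ Forall (wf ar) l.
Proof.
  simpl. split; intros [H1 H2]; split; auto; clear H1.
  - induction l; auto. destruct H2. constructor; auto.
  - induction l; auto. inversion H2; subst. split; auto; apply IHl; auto.
Qed.

Fixpoint eval2 (J : S -> list nat -> nat) (beta F : nat -> nat) (t : term S) : nat :=
  match t with
  | TVar i => beta i
  | TSO a => F a
  | TZero => 0
  | TSucc a => Datatypes.S (eval2 J beta F a)
  | TPlus a b => eval2 J beta F a + eval2 J beta F b
  | TFun g args => J g (map (eval2 J beta F) args)
  end.

Lemma eval2_mono ar J : interpretation ar J -> forall t b1 b2 F1 F2,
  wf ar t -> (forall i, In i (vars t) -> b1 i <= b2 i) ->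
  (forall a, In a (sovars t) -> F1 a <= F2 a) ->
  eval2 J b1 F1 t <= eval2 J b2 F2 t.
Proof.
  intros HJ t; induction t using tind; intros b1 b2 F1 F2 Hw Hv Hs.
  - apply Hv; simpl; auto.
  - apply Hs; simpl; auto.
  - simpl; auto.
  - simpl in *. specialize (IHt b1 b2 F1 F2 Hw Hv Hs). lia.
  - simpl in *. destruct Hw.
    assert (eval2 J b1 F1 t1 <= eval2 J b2 F2 t1) by
      (apply IHt1; auto; intros; [apply Hv|apply Hs]; apply in_or_app; auto).
    assert (eval2 J b1 F1 t2 <= eval2 J b2 F2 t2) by
      (apply IHt2; auto; intros; [apply Hv|apply Hs]; apply in_or_app; auto).
    lia.
  - pose proof (proj1 (wf_fun ar g l) Hw) as [Hl Hf].
    rewrite vars_fun in Hv. rewrite sovars_fun in Hs.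
    simpl. apply HJ. rewrite length_map; auto.
    clear Hl Hw. induction H; simpl in *; constructor.
    + inversion Hf; subst. apply H; auto; intros; [apply Hv|apply Hs]; apply in_or_app; auto.
    + inversion Hf; subst. apply IHForall; auto; intros; [apply Hv|apply Hs]; apply in_or_app; auto.
Qed.

Lemma eval_eval2 J b t : eval J b t = eval2 J b (fun _ => 0) t.
Proof.
  induction t using tind; simpl; auto. f_equal. apply map_ext_in.
  intros. rewrite Forall_forall in H. auto.
Qed.

Lemma eval_subst J b xi t :
  eval J b (subst xi t) = eval2 J b (fun g => eval J b (xi g)) t.
Proof.
  induction t using tind; simpl; auto. f_equal. rewrite map_map. apply map_ext_in.
  intros. rewrite Forall_forall in H. auto.
Qed.

Lemma eval_sk (K : S + nat -> list nat -> nat) sv b t :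
  eval K b (subst (xi_sk sv) (rename inl t)) =
  eval2 (fun g => K (inl g)) b (fun a => K (inr a) (map b (sv a))) t.
Proof.
  induction t using tind; simpl; auto.
  - unfold xi_sk. simpl. rewrite map_map. reflexivity.
  - f_equal. rewrite !map_map. apply map_ext_in.
    intros. rewrite Forall_forall in H. auto.
Qed.

Lemma in_sk sv (Phi : socp S) x y : In (x, y) (sk sv Phi) ->
  exists a b, In (Le a b) Phi /\ x = subst (xi_sk sv) (rename inl a) /\
    y = subst (xi_sk sv) (rename inl b).
Proof.
  induction Phi as [|c Phi IH]; simpl; [tauto|].
  destruct c; simpl.
  - intros [H|H].
    + inversion H; subst. eauto 10.
    + destruct (IH H) as (a&b&?&?&?). eauto 10.
  - intros H. destruct (IH H) as (a&b&?&?&?). eauto 10.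
Qed.

Lemma sk_in sv (Phi : socp S) a b : In (Le a b) Phi ->
  In (subst (xi_sk sv) (rename inl a), subst (xi_sk sv) (rename inl b)) (sk sv Phi).
Proof.
  induction Phi as [|c Phi IH]; simpl; [tauto|].
  intros [H|H]; [subst; simpl; auto|].
  destruct c; simpl; auto.
Qed.

Fixpoint idx (i : nat) (s : list nat) : nat :=
  match s with nil => 0 | x :: s' => if Nat.eqb i x then 0 else Datatypes.S (idx i s') end.

Lemma nth_idx b i s : In i s -> nth (idx i s) (map b s) 0 = b i.
Proof.
  induction s; simpl; [tauto|]. intros [H|H].
  - subst. rewrite Nat.eqb_refl. auto.
  - destruct (Nat.eqb_spec i a); subst; auto.
Qed.

Lemma Forall2_nth (l1 l2 : list nat) k : Forall2 le l1 l2 -> nth k l1 0 <= nth k l2 0.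
Proof.
  intros H; revert k; induction H; intros [|k]; simpl; auto.
Qed.

End Aux.
Arguments eval2 {S}.

Theorem mainTheorem11 (S : Type) (ar : S -> nat) (Phi : socp S)
  (sv : nat -> list nat) :
  wf_socp ar Phi ->
  enumerates_SV Phi sv ->
  (* (1) Soundness *)
  (forall J : S + nat -> list nat -> nat,
     interpretation (ar_sk ar sv) J ->
     satisfies J (sk sv Phi) ->
     so_subst (ar_sk ar sv) (xi_sk sv) /\ is_model J (xi_sk sv) (lift_socp Phi))
  /\
  (* (2) Completeness *)
  (forall (J : S -> list nat -> nat) (xi : nat -> term S),
     interpretation ar J ->
     so_subst ar xi ->
     is_model J xi Phi ->
     exists J' : S + nat -> list nat -> nat,
       interpretation (ar_sk ar sv) J' /\
       (forall g l, J' (inl g) l = J g l) /\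
       satisfies J' (sk sv Phi)).
Proof.
  intros Hwf Hsv. split.
  - intros J HJ Hsat. split.
    + intros a. unfold xi_sk. split.
      * apply wf_fun. split; [rewrite length_map; reflexivity|].
        apply Forall_forall. intros x Hx. apply in_map_iff in Hx as (?&<-&_). exact I.
      * rewrite sovars_fun. induction (sv a); simpl; auto.
    + split.
      * intros a' b' H. unfold lift_socp in H. apply in_map_iff in H as (c&Hc&Hin).
        destruct c; inversion Hc; subst. apply Hsat. apply sk_in. auto.
      * intros i a H. unfold lift_socp in H. apply in_map_iff in H as (c&Hc&Hin).
        destruct c; inversion Hc; subst.
        unfold xi_sk. rewrite vars_fun. intros Hi.
        assert (In i (sv a)).
        { clear -Hi. induction (sv a); simpl in *; auto. destruct Hi as [->|Hi]; auto. }
        apply (proj2 (Hsv a) i) in H as [_ H]. auto.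
  - intros J xi HJ Hxi [Hm1 Hm2].
    set (J' := fun (g : S + nat) (l : list nat) =>
      match g with
      | inl g' => J g' l
      | inr a => eval J (fun i => if in_dec Nat.eq_dec i (sv a) then nth (idx i (sv a)) l 0 else 0) (xi a)
      end).
    exists J'. split; [|split; [reflexivity|]].
    + intros [g|a] l1 l2 Hl H12; simpl in *.
      * apply HJ; auto.
      * rewrite !eval_eval2. eapply eval2_mono; [exact HJ|..]; auto.
        -- apply Hxi.
        -- intros i _. destruct in_dec; auto. apply Forall2_nth; auto.
    + intros x y Hxy. apply in_sk in Hxy as (a&b&Hab&->&->).
      intros beta. rewrite !eval_sk. simpl.
      set (ba := fun a i => if in_dec Nat.eq_dec i (sv a) then beta i else 0).
      set (Fa := fun a0 => eval J (ba a0) (xi a0)).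
      assert (HF : forall a0, eval J (fun i => if in_dec Nat.eq_dec i (sv a0)
                 then nth (idx i (sv a0)) (map beta (sv a0)) 0 else 0) (xi a0) = Fa a0).
      { intros a0. unfold Fa. rewrite !eval_eval2. apply Nat.le_antisymm;
        eapply eval2_mono; [exact HJ|..]; try apply Hxi; auto; intros i _; unfold ba;
        destruct in_dec; auto; rewrite nth_idx; auto. }
      assert (E : (fun a0 => J' (inr a0) (map beta (sv a0))) = Fa).
      { apply functional_extensionality. intros a0. apply HF. }
      change (eval2 J beta (fun a0 => J' (inr a0) (map beta (sv a0))) a <= eval2 J beta (fun a0 => J' (inr a0) (map beta (sv a0))) b). rewrite E.
      destruct (Hwf a b Hab) as [Hwa Hwb].
      set (beta' := fun i => if excluded_middle_informative
             (forall al, In al (sovars b) -> inV Phi al i) then beta i else 0).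
      pose proof (Hm1 a b Hab beta') as Hm.
      rewrite !eval_subst in Hm.
      eapply Nat.le_trans; [|eapply Nat.le_trans; [exact Hm|]].
      * eapply eval2_mono; [exact HJ|exact Hwa|..].
        -- intros i Hi. unfold beta'. destruct excluded_middle_informative as [|n]; auto.
           exfalso. apply n. intros al Hal. eapply inV_var; eauto.
        -- intros g Hg. unfold Fa. rewrite !eval_eval2.
           eapply eval2_mono; [exact HJ|apply Hxi|..]; [|rewrite (proj2 (Hxi g)); simpl; tauto].
           intros i _. unfold ba, beta'. destruct in_dec as [Hin|]; [|lia].
           destruct excluded_middle_informative as [|n]; auto.
           exfalso. apply n. intros al Hal. apply (proj2 (Hsv g) i) in Hin as [Hin _].
           eapply inV_so; eauto.
      * eapply eval2_mono; [exact HJ|exact Hwb|..].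
        -- intros i Hi. unfold beta'. destruct excluded_middle_informative; lia.
        -- intros g Hg. unfold Fa. rewrite !eval_eval2.
           eapply eval2_mono; [exact HJ|apply Hxi|..]; [|rewrite (proj2 (Hxi g)); simpl; tauto].
           intros i Hi. unfold ba, beta'. destruct excluded_middle_informative as [Hp|]; [|lia].
           destruct in_dec as [|Hn]; auto. exfalso. apply Hn. apply (proj2 (Hsv g) i).
           split; auto. intros Hno. exact (Hm2 _ _ Hno Hi).
Qed.
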